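(* Let $L>0$ and let $s\mapsto A(s)$, $s\in\mathbb{R}$, be an $L$-periodic $C^1$ family of complex symmetric $2\times 2$ matrices such that for every $s$, $A(s)A(s)^\dagger$ has eigenvalues $\lambda_1(s)^2>\lambda_2(s)^2>0$ ($\lambda_j>0$). Let $\mathbf{u}_1(s),\mathbf{u}_2(s)$ be $C^1$, $L$-periodic, orthonormal eigenvectors with $A A^\dagger\mathbf{u}_j=\lambda_j^2\mathbf{u}_j$, let $\tilde\lambda_j(s)=\mathbf{u}_j(s)^TA(s)^\dagger\mathbf{u}_j(s)$, and let $\gamma_j:\mathbb{R}\to\mathbb{R}$ be a $C^1$ function with $\tilde\lambda_j=\lambda_j e^{i\gamma_j}$. Define $\psi_{j,\pm}(s)=\frac{1}{\sqrt2}\begin{pmatrix}\pm e^{-i\gamma_j(s)}\mathbf{u}_j(s)\\ \overline{\mathbf{u}_j(s)}\end{pmatrix}$ and the Zak phase $\mathcal{Z}_j=i\int_0^L\langle\psi_{j,\pm}(s),\partial_s\psi_{j,\pm}(s)\rangle\,ds$ (inner product antilinear in the first slot). Then, for either choice of sign, $$\mathcal{Z}_j=\frac{\gamma_j(L)-\gamma_j(0)}{2}=\pi\,W(\tilde\lambda_j),$$ where $W(\tilde\lambda_j)\in\mathbb{Z}$ is the winding number about $0$ of the closed curve $s\mapsto\tilde\lambda_j(s)$, $s\in[0,L]$.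
   Context: $\overline{\cdot}$ denotes complex conjugation, $^T$ transpose, $^\dagger$ conjugate transpose. The winding number of a nonvanishing continuous $L$-periodic function $f:\mathbb{R}\to\mathbb{C}\setminus\{0\}$ is $(\arg f(L)-\arg f(0))/(2\pi)$ for a continuous branch of $\arg f$. *)

(* Defs.v *)
From Stdlib Require Import Reals ZArith.
Open Scope R_scope.

Definition C : Type := (R * R)%type.
Definition Cre (z : C) : R := fst z.
Definition Cim (z : C) : R := snd z.
Definition RtoC (x : R) : C := (x, 0).
Definition Cadd (z w : C) : C := (Cre z + Cre w, Cim z + Cim w).
Definition Cmul (z w : C) : C :=
  (Cre z * Cre w - Cim z * Cim w, Cre z * Cim w + Cim z * Cre w).
Definition Cconj (z : C) : C := (Cre z, - Cim z).
Definition Cnorm (z : C) : R := sqrt (Cre z * Cre z + Cim z * Cim z).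
Definition Cexpi (t : R) : C := (cos t, sin t).

(** Vectors in C^2 and 2x2 complex matrices (given by rows). *)
Definition V2 : Type := (C * C)%type.
Definition M2 : Type := (V2 * V2)%type.
Definition v1 (v : V2) : C := fst v.
Definition v2 (v : V2) : C := snd v.
Definition m11 (M : M2) : C := fst (fst M).
Definition m12 (M : M2) : C := snd (fst M).
Definition m21 (M : M2) : C := fst (snd M).
Definition m22 (M : M2) : C := snd (snd M).
Definition mk2 (a b c d : C) : M2 := ((a, b), (c, d)).

Definition mtrans (M : M2) : M2 := mk2 (m11 M) (m21 M) (m12 M) (m22 M).
Definition mconj (M : M2) : M2 :=
  mk2 (Cconj (m11 M)) (Cconj (m12 M)) (Cconj (m21 M)) (Cconj (m22 M)).
Definition madj (M : M2) : M2 := mconj (mtrans M).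
Definition mmul (M N : M2) : M2 :=
  mk2 (Cadd (Cmul (m11 M) (m11 N)) (Cmul (m12 M) (m21 N)))
      (Cadd (Cmul (m11 M) (m12 N)) (Cmul (m12 M) (m22 N)))
      (Cadd (Cmul (m21 M) (m11 N)) (Cmul (m22 M) (m21 N)))
      (Cadd (Cmul (m21 M) (m12 N)) (Cmul (m22 M) (m22 N))).
Definition mvec (M : M2) (v : V2) : V2 :=
  (Cadd (Cmul (m11 M) (v1 v)) (Cmul (m12 M) (v2 v)),
   Cadd (Cmul (m21 M) (v1 v)) (Cmul (m22 M) (v2 v))).
Definition vscale (c : C) (v : V2) : V2 := (Cmul c (v1 v), Cmul c (v2 v)).
Definition vconj (v : V2) : V2 := (Cconj (v1 v), Cconj (v2 v)).
(** bilinear product u^T w (no conjugation) *)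
Definition bil2 (u w : V2) : C := Cadd (Cmul (v1 u) (v1 w)) (Cmul (v2 u) (v2 w)).
Definition inner2 (u w : V2) : C := bil2 (vconj u) w.

Definition V4 : Type := (V2 * V2)%type.
Definition inner4 (p q : V4) : C := Cadd (inner2 (fst p) (fst q)) (inner2 (snd p) (snd q)).

Definition has_cderiv (f : R -> C) (s : R) (d : C) : Prop :=
  derivable_pt_lim (fun t => Cre (f t)) s (Cre d) /\
  derivable_pt_lim (fun t => Cim (f t)) s (Cim d).

Definition C1R (f : R -> R) : Prop :=
  exists df : R -> R, (forall s, derivable_pt_lim f s (df s)) /\ continuity df.
Definition C1C (f : R -> C) : Prop :=
  C1R (fun t => Cre (f t)) /\ C1R (fun t => Cim (f t)).
Definition C1V2 (f : R -> V2) : Prop :=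
  C1C (fun t => v1 (f t)) /\ C1C (fun t => v2 (f t)).
Definition C1M2 (f : R -> M2) : Prop :=
  C1C (fun t => m11 (f t)) /\ C1C (fun t => m12 (f t)) /\
  C1C (fun t => m21 (f t)) /\ C1C (fun t => m22 (f t)).

Definition has_deriv4 (p : R -> V4) (s : R) (d : V4) : Prop :=
  has_cderiv (fun t => v1 (fst (p t))) s (v1 (fst d)) /\
  has_cderiv (fun t => v2 (fst (p t))) s (v2 (fst d)) /\
  has_cderiv (fun t => v1 (snd (p t))) s (v1 (snd d)) /\
  has_cderiv (fun t => v2 (snd (p t))) s (v2 (snd d)).

(** Derivatives
    and Riemann integrals are unique, so this determines z. *)
Definition zak_phase (psi : R -> V4) (L : R) (z : C) : Prop :=
  exists dpsi : R -> V4,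
    (forall s, has_deriv4 psi s (dpsi s)) /\
    exists (pr_re : Riemann_integrable (fun s => Cre (inner4 (psi s) (dpsi s))) 0 L)
           (pr_im : Riemann_integrable (fun s => Cim (inner4 (psi s) (dpsi s))) 0 L),
      z = Cmul (0, 1) (RiemannInt pr_re, RiemannInt pr_im).

Definition is_arg_branch (f : R -> C) (th : R -> R) : Prop :=
  continuity th /\ forall s, f s = Cmul (RtoC (Cnorm (f s))) (Cexpi (th s)).
Definition winding_number (f : R -> C) (L : R) (w : R) : Prop :=
  (forall s, f s <> (0, 0)) /\
  exists th : R -> R, is_arg_branch f th /\ w = (th L - th 0) / (2 * PI).

Definition psi_state (sign : bool) (gam : R -> R) (u : R -> V2) (s : R) : V4 :=
  let c := RtoC (/ sqrt 2) in
  let sg := if sign then RtoC 1 else RtoC (-1) in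
  (vscale (Cmul c (Cmul sg (Cexpi (- gam s)))) (u s),
   vscale c (vconj (u s))).

(* Main.v *)
Require Import Defs.
From Stdlib Require Import Reals ZArith Lra Lia Psatz FunctionalExtensionality.
Open Scope R_scope.

Lemma dpl_eq f x l l' : derivable_pt_lim f x l -> l = l' -> derivable_pt_lim f x l'.
Proof. intros H ->; exact H. Qed.

Lemma cd_const (c : Defs.C) s : has_cderiv (fun _ => c) s (0,0).
Proof. split; simpl; apply derivable_pt_lim_const. Qed.

Lemma cd_mul f g s df dg :
  has_cderiv f s df -> has_cderiv g s dg ->
  has_cderiv (fun t => Cmul (f t) (g t)) s (Cadd (Cmul df (g s)) (Cmul (f s) dg)).
Proof.
  intros [Hf1 Hf2] [Hg1 Hg2]; split.
  - pose proof (derivable_pt_lim_minus _ _ _ _ _ (derivable_pt_lim_mult _ _ _ _ _ Hf1 Hg1)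
      (derivable_pt_lim_mult _ _ _ _ _ Hf2 Hg2)) as H.
    unfold minus_fct, mult_fct in H. eapply dpl_eq; [exact H|].
    unfold Cadd, Cmul, Cre, Cim; simpl; ring.
  - pose proof (derivable_pt_lim_plus _ _ _ _ _ (derivable_pt_lim_mult _ _ _ _ _ Hf1 Hg2)
      (derivable_pt_lim_mult _ _ _ _ _ Hf2 Hg1)) as H.
    unfold plus_fct, mult_fct in H. eapply dpl_eq; [exact H|].
    unfold Cadd, Cmul, Cre, Cim; simpl; ring.
Qed.

Lemma cd_add f g s df dg :
  has_cderiv f s df -> has_cderiv g s dg ->
  has_cderiv (fun t => Cadd (f t) (g t)) s (Cadd df dg).
Proof.
  intros [Hf1 Hf2] [Hg1 Hg2]; split.
  - exact (derivable_pt_lim_plus _ _ _ _ _ Hf1 Hg1).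
  - exact (derivable_pt_lim_plus _ _ _ _ _ Hf2 Hg2).
Qed.

Lemma cd_conj f s df : has_cderiv f s df -> has_cderiv (fun t => Cconj (f t)) s (Cconj df).
Proof.
  intros [H1 H2]; split.
  - exact H1.
  - exact (derivable_pt_lim_opp _ _ _ H2).
Qed.

Lemma cd_expi g s dg : derivable_pt_lim g s dg ->
  has_cderiv (fun t => Cexpi (- g t)) s (- sin (- g s) * (- dg), cos (- g s) * (- dg)).
Proof.
  intros H. pose proof (derivable_pt_lim_opp _ _ _ H) as H'. split.
  - exact (derivable_pt_lim_comp _ _ _ _ _ H' (derivable_pt_lim_cos _)).
  - exact (derivable_pt_lim_comp _ _ _ _ _ H' (derivable_pt_lim_sin _)).
Qed.

Lemma zak_gen L (g dg : R->R) (u : R -> V2) (dx1 dy1 dx2 dy2 : R->R) (sg : Defs.C) :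
  (forall s, derivable_pt_lim g s (dg s)) -> continuity dg ->
  (forall s, derivable_pt_lim (fun t => Cre (v1 (u t))) s (dx1 s)) ->
  (forall s, derivable_pt_lim (fun t => Cim (v1 (u t))) s (dy1 s)) ->
  (forall s, derivable_pt_lim (fun t => Cre (v2 (u t))) s (dx2 s)) ->
  (forall s, derivable_pt_lim (fun t => Cim (v2 (u t))) s (dy2 s)) ->
  (forall s, inner2 (u s) (u s) = RtoC 1) ->
  Cre sg * Cre sg + Cim sg * Cim sg = 1 ->
  zak_phase (fun s => (vscale (Cmul (RtoC (/ sqrt 2)) (Cmul sg (Cexpi (- g s)))) (u s),
                       vscale (RtoC (/sqrt 2)) (vconj (u s)))) L (RtoC ((g L - g 0)/2)).
Proof.
  intros Hg Hdg H1 H2 H3 H4 Hn Hsg.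
  set (c := RtoC (/ sqrt 2)).
  set (du := fun s => ((dx1 s, dy1 s), (dx2 s, dy2 s)) : V2).
  set (E := fun s => Cexpi (- g s)).
  set (dE := fun s => (- sin (- g s) * (- dg s), cos (- g s) * (- dg s)) : Defs.C).
  set (a := fun s => Cmul c (Cmul sg (E s))).
  set (da := fun s => Cadd (Cmul (0,0) (Cmul sg (E s))) (Cmul c (Cadd (Cmul (0,0) (E s)) (Cmul sg (dE s))))).
  assert (Hu1 : forall s, has_cderiv (fun t => v1 (u t)) s (v1 (du s))) by (intro s; split; auto).
  assert (Hu2 : forall s, has_cderiv (fun t => v2 (u t)) s (v2 (du s))) by (intro s; split; auto).
  assert (Ha : forall s, has_cderiv a s (da s)).
  { intro s. apply (cd_mul (fun _ => c)). apply cd_const.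
    apply (cd_mul (fun _ => sg)). apply cd_const. apply cd_expi. auto. }
  assert (HD : forall s, Cre (v1 (u s)) * dx1 s + Cim (v1 (u s)) * dy1 s
                       + Cre (v2 (u s)) * dx2 s + Cim (v2 (u s)) * dy2 s = 0).
  { intro s.
    assert (HN : has_cderiv (fun t => inner2 (u t) (u t)) s
       (Cadd (Cadd (Cmul (Cconj (v1 (du s))) (v1 (u s))) (Cmul (Cconj (v1 (u s))) (v1 (du s))))
             (Cadd (Cmul (Cconj (v2 (du s))) (v2 (u s))) (Cmul (Cconj (v2 (u s))) (v2 (du s)))))).
    { apply (cd_add (fun t => Cmul (Cconj (v1 (u t))) (v1 (u t))) (fun t => Cmul (Cconj (v2 (u t))) (v2 (u t))));
      [apply (cd_mul (fun t => Cconj (v1 (u t))) (fun t => v1 (u t))); [apply (cd_conj (fun t => v1 (u t)))|]; auto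
      |apply (cd_mul (fun t => Cconj (v2 (u t))) (fun t => v2 (u t))); [apply (cd_conj (fun t => v2 (u t)))|]; auto]. }
    destruct HN as [HN _].
    assert (Hf : (fun t => Cre (inner2 (u t) (u t))) = fct_cte 1).
    { apply functional_extensionality; intro t; rewrite Hn; reflexivity. }
    rewrite Hf in HN.
    pose proof (uniqueness_limite _ _ _ _ HN (derivable_pt_lim_const 1 s)) as HU.
    unfold Cadd, Cmul, Cconj, Cre, Cim, du in *; simpl in HU |- *. lra. }
  exists (fun s => ((Cadd (Cmul (da s) (v1 (u s))) (Cmul (a s) (v1 (du s))),
                    Cadd (Cmul (da s) (v2 (u s))) (Cmul (a s) (v2 (du s)))),
                   (Cadd (Cmul (0,0) (Cconj (v1 (u s)))) (Cmul c (Cconj (v1 (du s)))),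
                    Cadd (Cmul (0,0) (Cconj (v2 (u s)))) (Cmul c (Cconj (v2 (du s))))))).
  split.
  { intro s. split; [|split; [|split]].
    - apply (cd_mul a (fun t => v1 (u t))); auto.
    - apply (cd_mul a (fun t => v2 (u t))); auto.
    - apply (cd_mul (fun _ => c) (fun t => Cconj (v1 (u t)))). apply cd_const. apply (cd_conj (fun t => _ (u t))); auto.
    - apply (cd_mul (fun _ => c) (fun t => Cconj (v2 (u t)))). apply cd_const. apply (cd_conj (fun t => _ (u t))); auto. }
  match goal with |- exists (_ : Riemann_integrable ?F _ _) (_ : Riemann_integrable ?G _ _), _ =>
    assert (Fre : forall s, F s = 0); [|assert (Fim : forall s, G s = - dg s / 2)] end.
  { intro s. pose proof (HD s) as D. pose proof (Hn s) as N.
    unfold inner4, inner2, bil2, vconj, vscale, a, da, E, dE, du, c, Cexpi, Cadd, Cmul, Cconj, Cre, Cim, RtoC, v1, v2 in *.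
    simpl in *. 
    set (cs := / sqrt 2) in *. set (co := cos (- g s)). set (si := sin (- g s)).
    destruct sg as [sr sj]. destruct (u s) as [[x1 y1] [x2 y2]]. simpl in *.
    transitivity ((cs*cs*(sr*sr+sj*sj)*(co*co+si*si) + cs*cs) * (x1*dx1 s+y1*dy1 s+x2*dx2 s+y2*dy2 s)).
    ring. rewrite D; ring. }
  { intro s. pose proof (HD s) as D. pose proof (Hn s) as N.
    assert (Hc : / sqrt 2 * / sqrt 2 = / 2).
    { rewrite <- Rinv_mult, sqrt_sqrt; lra. }
    assert (Ht : cos (- g s) * cos (- g s) + sin (- g s) * sin (- g s) = 1).
    { pose proof (sin2_cos2 (- g s)) as HH. unfold Rsqr in HH. lra. }
    unfold inner4, inner2, bil2, vconj, vscale, a, da, E, dE, du, c, Cexpi, Cadd, Cmul, Cconj, Cre, Cim, RtoC, v1, v2 in *.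
    simpl in *. 
    set (cs := / sqrt 2) in *. set (co := cos (- g s)) in *. set (si := sin (- g s)) in *.
    destruct sg as [sr sj]. destruct (u s) as [[x1 y1] [x2 y2]]. simpl in *.
    injection N as N _.
    transitivity ((cs*cs*(sr*sr+sj*sj)*(co*co+si*si) - cs*cs) * (x1*dy1 s-y1*dx1 s+x2*dy2 s-y2*dx2 s)
       - dg s * (cs*cs*(sr*sr+sj*sj)*(co*co+si*si)) * (x1*x1+y1*y1+x2*x2+y2*y2)).
    ring. simpl in Hsg. rewrite Ht, Hsg, Hc. replace (x1*x1+y1*y1+x2*x2+y2*y2) with 1 by lra. field. }
  match goal with |- exists (_ : Riemann_integrable ?F _ _) (_ : Riemann_integrable ?G _ _), _ =>
    assert (EF : F = fct_cte 0) by (apply functional_extensionality; exact Fre);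
    set (dh := fun s => - dg s / 2);
    assert (EG : G = dh) by (apply functional_extensionality; exact Fim) end.
  rewrite EF, EG.
  set (h := fun s => - g s / 2).
  assert (Hh : forall s, derivable_pt_lim h s (dh s)).
  { intro s. unfold h, dh. pose proof (derivable_pt_lim_opp _ _ _ (Hg s)) as Ho.
    pose proof (derivable_pt_lim_mult _ _ _ _ _ Ho (derivable_pt_lim_const (/2) s)) as HM.
    unfold mult_fct, opp_fct, fct_cte in HM. eapply dpl_eq.
    - eapply derivable_pt_lim_ext; [|exact HM]. intros; simpl; field.
    - field. }
  assert (Cd : continuity dh).
  { exact (continuity_mult _ _ (continuity_opp _ Hdg) (continuity_const (fct_cte (/2)) (fun _ _ => eq_refl))). }
  set (hC := @mkC1 h (fun x => exist _ (dh x) (Hh x)) Cd).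
  exists (RiemannInt_P14 0 L 0), (RiemannInt_P32 hC 0 L).
  rewrite (RiemannInt_P15 (RiemannInt_P14 0 L 0)), (FTC_Riemann hC). simpl. unfold h, RtoC, Cmul, Cre, Cim. simpl.
  f_equal; field.
Qed.

Lemma cos1_int x : cos x = 1 -> exists k : Z, x = 2 * IZR k * PI.
Proof.
  intro H. replace x with (2 * (x/2)) in H by field. rewrite cos_2a_sin in H.
  assert (Hs : sin (x/2) = 0) by nra.
  destruct (sin_eq_0_0 _ Hs) as [k Hk]. exists k. lra.
Qed.

Lemma cnorm_polar l t : 0 < l -> Cnorm (Cmul (RtoC l) (Cexpi t)) = l.
Proof.
  intro Hl. unfold Cnorm, Cmul, RtoC, Cexpi, Cre, Cim; simpl.
  pose proof (sin2_cos2 t) as HH. unfold Rsqr in HH.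
  replace ((l * cos t - 0 * sin t) * (l * cos t - 0 * sin t) +
           (l * sin t + 0 * cos t) * (l * sin t + 0 * cos t)) with (l * l).
  - apply sqrt_square; lra.
  - transitivity (l * l * (sin t * sin t + cos t * cos t)); [rewrite HH|]; ring.
Qed.

Lemma polar_eq l1 l2 t1 t2 : 0 < l1 -> 0 < l2 ->
  Cmul (RtoC l1) (Cexpi t1) = Cmul (RtoC l2) (Cexpi t2) -> cos (t1 - t2) = 1.
Proof.
  intros H1 H2 E.
  assert (El : l1 = l2).
  { rewrite <- (cnorm_polar l1 t1), <- (cnorm_polar l2 t2), E; auto. }
  subst l2. unfold Cmul, RtoC, Cexpi, Cre, Cim in E; simpl in E.
  injection E as Ec Es.
  assert (cos t1 = cos t2) by (apply (Rmult_eq_reg_l l1); lra).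
  assert (sin t1 = sin t2) by (apply (Rmult_eq_reg_l l1); lra).
  rewrite cos_minus. pose proof (sin2_cos2 t2) as HH. unfold Rsqr in HH.
  rewrite H, H0. lra.
Qed.

Lemma const_branch (h : R -> R) L : continuity h -> 0 < L ->
  (forall s, cos (h s) = 1) -> h L = h 0.
Proof.
  intros Hc HL Hcos.
  assert (Hsin : forall s, sin (h s) = 0).
  { intro s. pose proof (sin2_cos2 (h s)) as HH. unfold Rsqr in HH. rewrite Hcos in HH. nra. }
  assert (Hd : cos (h L - h 0) = 1).
  { rewrite cos_minus, !Hcos, !Hsin. ring. }
  destruct (cos1_int _ Hd) as [k Hk].
  pose proof PI_RGT_0 as Hpi.
  destruct (Z.eq_dec k 0) as [->|Hk0]; [simpl in Hk; lra|].
  exfalso.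
  destruct (Z_lt_le_dec 0 k) as [Hp|Hn].
  - assert (IZR k >= 1) by (apply Rle_ge, IZR_le; lia).
    destruct (IVT (fun s => h s - (h 0 + PI)) 0 L) as [z [_ Hz]].
    + apply continuity_minus; [exact Hc|apply continuity_const; intros ? ?; reflexivity].
    + exact HL.
    + lra.
    + nra.
    + assert (h z = h 0 + PI) by lra. pose proof (Hcos z) as Cz. rewrite H0, neg_cos, Hcos in Cz. lra.
  - assert (IZR k <= -1) by (apply IZR_le; lia).
    destruct (IVT (fun s => (h 0 - PI) - h s) 0 L) as [z [_ Hz]].
    + apply continuity_minus; [apply continuity_const; intros ? ?; reflexivity|exact Hc].
    + exact HL.
    + lra.
    + nra.
    + assert (h z = h 0 - PI) by lra. pose proof (Hcos z) as Cz.
      rewrite H0, cos_minus, Hcos, Hsin, cos_PI, sin_PI in Cz. lra.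
Qed.

Theorem mainTheorem2
  (L : R) (A : R -> M2) (lam : nat -> R -> R) (u : nat -> R -> V2)
  (gam : nat -> R -> R) :
  0 < L ->
  C1M2 A ->
  (forall s, A (s + L) = A s) ->
  (forall s, mtrans (A s) = A s) ->
  (forall s, lam 1%nat s > lam 2%nat s /\ lam 2%nat s > 0) ->
  (forall j : nat, (j = 1 \/ j = 2)%nat ->
     C1V2 (u j) /\ (forall s, u j (s + L) = u j s) /\
     (forall s, mvec (mmul (A s) (madj (A s))) (u j s)
                = vscale (RtoC (lam j s ^ 2)) (u j s))) ->
  (forall s, inner2 (u 1%nat s) (u 1%nat s) = RtoC 1 /\
             inner2 (u 2%nat s) (u 2%nat s) = RtoC 1 /\
             inner2 (u 1%nat s) (u 2%nat s) = RtoC 0) ->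
  (forall j : nat, (j = 1 \/ j = 2)%nat ->
     C1R (gam j) /\
     (forall s, bil2 (u j s) (mvec (madj (A s)) (u j s))
                = Cmul (RtoC (lam j s)) (Cexpi (gam j s)))) ->
  forall j : nat, (j = 1 \/ j = 2)%nat -> forall sign : bool,
    let lt := fun s => bil2 (u j s) (mvec (madj (A s)) (u j s)) in
    zak_phase (psi_state sign (gam j) (u j)) L
              (RtoC ((gam j L - gam j 0) / 2)) /\
    (exists W : Z, winding_number lt L (IZR W)) /\
    (forall w, winding_number lt L w -> (gam j L - gam j 0) / 2 = PI * w).
Proof.
  intros HL HA HAp HAs Hlam Hu Hn Hg j Hj sign lt.
  assert (Hlp : forall s, 0 < lam j s).
  { intro s; destruct (Hlam s); destruct Hj as [ -> | -> ]; lra. }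
  assert (Hnj : forall s, inner2 (u j s) (u j s) = RtoC 1).
  { intro s; destruct (Hn s) as [? [? ?]]; destruct Hj as [ -> | -> ]; auto. }
  destruct (Hu j Hj) as [[[[dx1 [Hx1 _]] [dy1 [Hy1 _]]] [[dx2 [Hx2 _]] [dy2 [Hy2 _]]]] [Hup _]].
  destruct (Hg j Hj) as [[dg [Hdg Hdgc]] Hpol].
  assert (Hcg : continuity (gam j)).
  { intro x. apply derivable_continuous_pt. exact (exist _ (dg x) (Hdg x)). }
  assert (Hlt : forall s, lt s = Cmul (RtoC (lam j s)) (Cexpi (gam j s))) by exact Hpol.
  split; [|split].
  - unfold psi_state.
    apply (zak_gen L (gam j) dg (u j) dx1 dy1 dx2 dy2 (if sign then RtoC 1 else RtoC (-1)));
      auto.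
    destruct sign; unfold RtoC, Cre, Cim; simpl; lra.
  - assert (HP : lt L = lt 0).
    { unfold lt. pose proof (HAp 0) as H1. pose proof (Hup 0) as H2.
      rewrite Rplus_0_l in H1, H2. rewrite H1, H2. reflexivity. }
    rewrite !Hlt in HP.
    pose proof (polar_eq _ _ _ _ (Hlp L) (Hlp 0) HP) as Hc.
    destruct (cos1_int _ Hc) as [k Hk].
    exists k. split.
    + intros s E. rewrite Hlt in E. pose proof (cnorm_polar _ (gam j s) (Hlp s)) as HN.
      rewrite E in HN. unfold Cnorm, Cre, Cim in HN; simpl in HN.
      rewrite Rmult_0_l, Rplus_0_l, sqrt_0 in HN. pose proof (Hlp s). lra.
    + exists (gam j). split.
      * split; [exact Hcg|]. intro s. rewrite Hlt, cnorm_polar; auto.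
      * pose proof PI_RGT_0. rewrite Hk. field. lra.
  - intros w [_ [th [[Hth Hthp] Hw]]].
    assert (Hcos : forall s, cos (th s - gam j s) = 1).
    { intro s. pose proof (Hthp s) as E. rewrite Hlt, cnorm_polar in E; auto.
      symmetry in E. exact (polar_eq _ _ _ _ (Hlp s) (Hlp s) E). }
    pose proof (const_branch (fun s => th s - gam j s) L
                  (continuity_minus _ _ Hth Hcg) HL Hcos) as HE.
    simpl in HE. subst w. pose proof PI_RGT_0. field_simplify; [|lra]. lra.
Qed.
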